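(* Let $M$ be a finite $\mathbb{Z}[D]$-module. Then \[\frac{|M|\,|M^D|^2}{|M^R|\,|M^\Sigma|^2}=\frac{\hat h^0(D,M)}{\hat h^{-1}(D,M)},\] and consequently \[\mathcal C_\Theta(M)=\left(\frac{\hat h^{-1}(D,M)}{\hat h^0(D,M)}\right)^2=\frac{\hat h^{-1}(\Theta,M)}{\hat h^0(\Theta,M)}.\] If moreover $M\cong M^\vee$ as $\mathbb{Z}[D]$-modules, then $\frac{|M|\,|M^D|^2}{|M^R|\,|M^\Sigma|^2}=\mathcal C_\Theta(M)=1$.
   Context: Let $q>1$ be an odd integer, $D=\langle\rho,\sigma:\rho^q=\sigma^2=1,\ \sigma\rho\sigma^{-1}=\rho^{-1}\rangle$ the dihedral group of order $2q$, $R=\langle\rho\rangle$, $\Sigma=\langle\sigma\rangle$, and $\Theta=1+2D-R-2\Sigma$, i.e. the $D$-Brauer relation $\sum_H n_HH$ with $n_{\{1\}}=1$, $n_D=2$, $n_R=-1$, $n_\Sigma=-2$ and $n_H=0$ for all other subgroups. For a finitely generated $\mathbb{Z}[D]$-module $M$, write $M_{\mathrm{tors}}$ for its $\mathbb{Z}$-torsion subgroup and $M_{\mathrm{tf}}=M/M_{\mathrm{tors}}$; the regulator constant is $\mathcal C_\Theta(M)=\prod_{H\le D}\bigl(|M_{\mathrm{tors}}^H|^{-2}\det(\tfrac{1}{|H|}\langle\cdot,\cdot\rangle|_{(M^H)_{\mathrm{tf}}})\bigr)^{n_H}$, where $\langle\cdot,\cdot\rangle:M\times M\to\mathscr L$ is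 any $D$-invariant $\mathbb{Z}$-bilinear pairing into a field $\mathscr L\supseteq\mathbb{Q}$ non-degenerate on $M_{\mathrm{tf}}$ and the determinant is taken on a $\mathbb{Z}$-basis of $(M^H)_{\mathrm{tf}}$ (independent of the pairing; for finite $M$ it equals $\prod_H|M^H|^{-2n_H}$). For $i\in\mathbb{Z}$ and $H\le D$, $\hat H^i(H,M)$ is Tate cohomology, $\hat h^i(H,M)=|\hat H^i(H,M)|$, $\hat h^i(\Theta,M)=\prod_H\hat h^i(H,M)^{n_H}$. For finite $M$, $M^\vee=\mathrm{Hom}(M,\mathbb{Q}/\mathbb{Z})$ with action $(g\psi)(m)=\psi(g^{-1}m)$. *)

(* Defs.v *)
From mathcomp Require Import all_boot all_order all_algebra all_fingroup.
Set Implicit Arguments. Unset Strict Implicit. Unset Printing Implicit Defensive.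
Import Order.TTheory GRing.Theory Num.Theory.

Local Open Scope ring_scope.

Section Defs.
Variables (gT : finGroupType) (M : finZmodType).

Definition is_ZG_module (D : {set gT}) (act : gT -> M -> M) : Prop :=
  [/\ forall m, act 1%g m = m,
      forall g h, g \in D -> h \in D -> forall m, act (g * h)%g m = act g (act h m)
    & forall g, g \in D -> forall m m', act g (m + m') = act g m + act g m'].

Variable act : gT -> M -> M.

Definition fixedM (H : {set gT}) : {set M} := [set m | [forall h in H, act h m == m]].

Definition normM (H : {set gT}) (m : M) : M := \sum_(h in H) act h m.

Definition normImg (H : {set gT}) : {set M} := [set normM H m | m in [set: M]].
Definition normKer (H : {set gT}) : {set M} := [set m | normM H m == 0].
(* I_H M, the subgroup generated by the (h-1)m (M is a finGroupType via +) *)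
Definition augM (H : {set gT}) : {set M} :=
  <<[set act h m - m | h in H, m in [set: M]]>>%g.

Definition tate0 (H : {set gT}) := (fixedM H / normImg H)%g.
Definition tatem1 (H : {set gT}) := (normKer H / augM H)%g.
Definition hhat0 (H : {set gT}) : nat := #|tate0 H|.
Definition hhatm1 (H : {set gT}) : nat := #|tatem1 H|.

(* The Brauer relation Theta = 1 + 2D - R - 2Sigma applied multiplicatively *)
Definition theta_prod (D R S : {set gT}) (f : {set gT} -> rat) : rat :=
  f 1%g * f D ^+ 2 / (f R * f S ^+ 2).

(* Regulator constant of a FINITE module: prod_H |M^H|^(-2 n_H) *)
Definition regconst_fin (D R S : {set gT}) : rat :=
  theta_prod D R S (fun H => (#|fixedM H|%:R ^+ 2)^-1).

(* Q/Z represented by rationals in [0,1) with addition r + s mod 1 *)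
Definition fracQ (r : rat) : rat := r - (Num.floor r)%:~R.

Definition QZ_hom (psi : M -> rat) : Prop :=
  (forall m, 0 <= psi m < 1) /\ (forall m m', psi (m + m') = fracQ (psi m + psi m')).

(* f : M -> M^vee = Hom(M, Q/Z) is an isomorphism of Z[D]-modules,
   where (g psi)(m) = psi(g^-1 m). *)
Definition dual_iso (D : {set gT}) (f : M -> M -> rat) : Prop :=
  [/\ forall m, QZ_hom (f m),
      forall m m' x, f (m + m') x = fracQ (f m x + f m' x),
      injective f,
      forall psi, QZ_hom psi -> exists m, forall x, f m x = psi x
    & forall g, g \in D -> forall m x, f (act g m) x = f m (act g^-1%g x)].

Definition self_dual (D : {set gT}) : Prop := exists f, dual_iso D f.

End Defs.

(* Main.v *)
Require Import Defs.
From mathcomp Require Import all_boot all_order all_algebra all_fingroup.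
From mathcomp Require Import ring lra cyclic zify.
From Stdlib Require Import FunctionalExtensionality.
Import Order.TTheory GRing.Theory Num.Theory.
Local Open Scope ring_scope.
Set Implicit Arguments. Unset Strict Implicit. Unset Printing Implicit Defensive.

Section Frac.

Lemma fracQ_char (r : rat) (z : int) : 0 <= r - z%:~R < 1 -> fracQ r = r - z%:~R.
Proof.
move=> /andP[h1 h2]; rewrite /fracQ; congr (_ - _%:~R); apply: floor_def.
rewrite intrD; apply/andP; split; lra.
Qed.

Lemma fracQ_range r : 0 <= fracQ r < 1.
Proof.
have /andP[h1 h2] := floor_itv r.
rewrite intrD in h2; rewrite /fracQ; apply/andP; split; lra.
Qed.

Lemma fracQ_id r : 0 <= r < 1 -> fracQ r = r.
Proof. by move=> h; rewrite (@fracQ_char r 0) ?subr0. Qed.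

Lemma fracQ_addz r (z : int) : fracQ (r + z%:~R) = fracQ r.
Proof.
rewrite (@fracQ_char _ (Num.floor r + z)); last first.
  by rewrite rmorphD /= opprD addrACA subrr addr0; apply: fracQ_range.
by rewrite /fracQ rmorphD /= opprD addrACA subrr addr0.
Qed.

Lemma fracQDl r s : fracQ (fracQ r + s) = fracQ (r + s).
Proof.
rewrite -(fracQ_addz (r + s) (- Num.floor r)) intrN; congr fracQ.
rewrite /fracQ; ring.
Qed.

Lemma fracQDr r s : fracQ (r + fracQ s) = fracQ (r + s).
Proof. by rewrite addrC fracQDl addrC. Qed.

Lemma fracQ_cancel a b : 0 <= a < 1 -> 0 <= b < 1 -> fracQ (a + b) = b -> a = 0.
Proof.
move=> ha hb; rewrite /fracQ => /eqP; rewrite subr_eq addrC => /eqP/addrI ea.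
have : Num.floor a = 0 by apply: floor_def; rewrite add0r.
by rewrite ea intrKfloor => ->.
Qed.

End Frac.
Section Count.
Variable M : finZmodType.

Lemma card_kerim (f : M -> M) (fM : {morph f : x y / x + y}) (K : {group M}) :
  #|K| = (#|[set x in K | f x == 0%R]| * #|f @: K|)%N.
Proof.
have fM' : {in [set: M] &, {morph f : x y / (x * y)%g}} by move=> x y _ _; apply: fM.
pose fm := Morphism fM'.
have := card_morphim fm K.
rewrite morphimE setTI => ->.
have -> : [set x in K | f x == 0%R] = (K :&: 'ker fm)%g.
  by apply/setP => x; rewrite !inE.
by rewrite LagrangeI.
Qed.
End Count.

Section QZ.
Variable M : finZmodType.

Lemma QZ0 (psi : M -> rat) : QZ_hom psi -> psi 0 = 0.
Proof.
move=> [hr hD]; have := hD 0 0; rewrite addr0 => /esym.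
by apply: fracQ_cancel; apply: hr.
Qed.

Lemma QZMn (psi : M -> rat) x n : QZ_hom psi -> psi (x *+ n) = fracQ (n%:R * psi x).
Proof.
move=> hp; have [hr hD] := hp; elim: n => [|n IH].
  by rewrite mulr0n mul0r QZ0 // fracQ_id.
by rewrite mulrS hD IH fracQDr mulrSr mulrDl mul1r addrC.
Qed.

Lemma QZ_ker_group (psi : M -> rat) : QZ_hom psi -> group_set [set x | psi x == 0].
Proof.
move=> hp; have [hr hD] := hp; apply/group_setP; split; first by rewrite inE QZ0.
move=> x y; rewrite !inE => /eqP hx /eqP hy.
by rewrite -[(x * y)%g]/(x + y) hD hx hy addr0 fracQ_id // lexx ltr01.
Qed.

End QZ.

Section Act.
Variables (gT : finGroupType) (M : finZmodType) (act : gT -> M -> M) (G : {group gT}).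
Hypothesis Hmod : is_ZG_module G act.

Lemma act1 m : act 1%g m = m. Proof. by case: Hmod. Qed.
Lemma actM g h m : g \in G -> h \in G -> act (g * h)%g m = act g (act h m).
Proof. by case: Hmod => _ H _ hg hh; apply: H. Qed.
Lemma actD g m m' : g \in G -> act g (m + m') = act g m + act g m'.
Proof. by case: Hmod => _ _ H hg; apply: H. Qed.
Lemma act0 g : g \in G -> act g 0 = 0.
Proof. by move=> hg; apply: (addrI (act g 0)); rewrite -actD // !addr0. Qed.
Lemma actN g m : g \in G -> act g (- m) = - act g m.
Proof. by move=> hg; apply/eqP; rewrite -addr_eq0 -actD // addNr act0. Qed.
Lemma actB g m m' : g \in G -> act g (m - m') = act g m - act g m'.
Proof. by move=> hg; rewrite actD // actN. Qed.
Lemma actMn g m n : g \in G -> act g (m *+ n) = act g m *+ n.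
Proof. by move=> hg; elim: n => [|n IH]; rewrite ?mulr0n ?act0 // !mulrS actD // IH. Qed.
Lemma act_sum g (I : finType) (P : pred I) (F : I -> M) : g \in G ->
  act g (\sum_(i | P i) F i) = \sum_(i | P i) act g (F i).
Proof. by move=> hg; apply: (big_morph (act g)) => [x y|]; [apply: actD | apply: act0]. Qed.
Lemma actVK g m : g \in G -> act g^-1 (act g m) = m.
Proof. by move=> hg; rewrite -actM ?groupV // mulVg act1. Qed.
Lemma actKV g m : g \in G -> act g (act g^-1 m) = m.
Proof. by move=> hg; rewrite -actM ?groupV // mulgV act1. Qed.
Lemma actX g n m : g \in G -> act (g ^+ n) m = iter n (act g) m.
Proof. by move=> hg; elim: n => [|n IH]; rewrite ?expg0 ?act1 // expgS actM ?groupX // IH. Qed.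

Lemma fixedP (H : {set gT}) m : m \in fixedM act H -> forall h, h \in H -> act h m = m.
Proof. by rewrite inE => /forall_inP H1 h /H1 /eqP. Qed.
Lemma fixedPn (H : {set gT}) m : (forall h, h \in H -> act h m = m) -> m \in fixedM act H.
Proof. by move=> H1; rewrite inE; apply/forall_inP => h /H1 ->. Qed.

Lemma add_group_set (A : {set M}) : (0 : M) \in A -> (forall x y, x \in A -> y \in A -> x + y \in A) ->
  group_set A.
Proof. by move=> h0 hD; apply/group_setP; split => // x y; apply: hD. Qed.

Lemma img_group (f : M -> M) : {morph f : x y / x + y} -> group_set [set f m | m in [set: M]].
Proof.
move=> fM; have f0 : f 0 = 0 by apply: (addrI (f 0)); rewrite -fM !addr0.
apply: add_group_set; first by apply/imsetP; exists 0; rewrite ?inE.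
move=> x y /imsetP[a _ ->] /imsetP[b _ ->]; apply/imsetP; exists (a + b); rewrite ?inE //.
Qed.

Lemma ker_group (f : M -> M) : {morph f : x y / x + y} -> group_set [set m | f m == 0].
Proof.
move=> fM; have f0 : f 0 = 0 by apply: (addrI (f 0)); rewrite -fM !addr0.
apply: add_group_set; first by rewrite inE f0.
by move=> x y; rewrite !inE fM => /eqP -> /eqP ->; rewrite addr0.
Qed.

Section Sub.
Variable H : {group gT}.
Hypothesis sHG : H \subset G.

Lemma fixed_group : group_set (fixedM act H).
Proof.
apply: add_group_set.
  by apply: fixedPn => h hh; rewrite act0 // (subsetP sHG).
move=> x y hx hy; apply: fixedPn => h hh.
by rewrite actD ?(subsetP sHG) // (fixedP hx) // (fixedP hy).
Qed.

Lemma normM_add : {morph normM act H : x y / x + y}.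
Proof.
move=> x y; rewrite /normM -big_split /=; apply: eq_bigr => h hh.
by rewrite actD // (subsetP sHG).
Qed.

Lemma normM_fixed m h : h \in H -> act h (normM act H m) = normM act H m.
Proof.
move=> hh; have hg := subsetP sHG _ hh.
rewrite /normM act_sum //; rewrite [RHS](reindex_inj (mulgI h)) /=.
apply: eq_big => [k|k hk]; first by rewrite groupMl.
by rewrite actM // (subsetP sHG).
Qed.

Lemma normM_act m h : h \in H -> normM act H (act h m) = normM act H m.
Proof.
move=> hh; have hg := subsetP sHG _ hh.
rewrite /normM [RHS](reindex_inj (mulIg h)) /=.
apply: eq_big => [k|k hk]; first by rewrite groupMr.
by rewrite actM // (subsetP sHG).
Qed.

Lemma normImg_group : group_set (normImg act H).
Proof. exact: img_group normM_add. Qed.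
Lemma normKer_group : group_set (normKer act H).
Proof. exact: ker_group normM_add. Qed.

Lemma normImg_sub : normImg act H \subset fixedM act H.
Proof.
apply/subsetP => x /imsetP[m _ ->]; apply: fixedPn => h hh; exact: normM_fixed.
Qed.

Lemma augM_sub : augM act H \subset normKer act H.
Proof.
rewrite -[normKer act H]/(gval (Group normKer_group)) gen_subG.
apply/subsetP => x /imset2P[h m hh _ ->]; rewrite inE.
have : normM act H (act h m - m + m) = normM act H (act h m) by rewrite subrK.
by rewrite normM_add normM_act // -[X in _ = X]add0r => /addIr ->.
Qed.

Lemma card_norm : (#|normKer act H| * #|normImg act H|)%N = #|M|.
Proof.
rewrite -cardsT -[[set: M]]/(gval [set: M]%G) (card_kerim normM_add).
have -> : [set x in [set: M]%G | normM act H x == 0%R] = normKer act H.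
  by apply/setP => x; rewrite !inE.
by [].
Qed.

Lemma abel_quo (A B : {group M}) : B \subset A -> (#|(A / B)%g| * #|B|)%N = #|A|.
Proof.
move=> sBA; rewrite card_quotient; last first.
  apply: subset_trans (subsetT A) _; apply: sub_abelian_norm; [exact: FinRing.zmod_abelian | exact: subsetT].
by rewrite mulnC Lagrange.
Qed.

Lemma h0_card : (hhat0 act H * #|normImg act H|)%N = #|fixedM act H|.
Proof.
rewrite /hhat0 /tate0 -[normImg act H]/(gval (Group normImg_group)).
rewrite -[fixedM act H]/(gval (Group fixed_group)) abel_quo //; exact: normImg_sub.
Qed.

Lemma hm1_card : (hhatm1 act H * #|augM act H|)%N = #|normKer act H|.
Proof.
rewrite /hhatm1 /tatem1 -[augM act H]/(gval (<<[set act h m - m | h in H, m in [set: M]]>>)%G).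
rewrite -[normKer act H]/(gval (Group normKer_group)) abel_quo //; exact: augM_sub.
Qed.

End Sub.

Definition Ig g := [set act g m - m | m in [set: M]].

Lemma Ig_add g : g \in G -> {morph (fun m => act g m - m) : x y / x + y}.
Proof. by move=> hg x y /=; rewrite actD // opprD addrACA. Qed.

Lemma Ig_group g : g \in G -> group_set (Ig g).
Proof. by move=> hg; apply: img_group; apply: Ig_add. Qed.

Lemma fixed_cycle g : g \in G -> fixedM act <[g]>%g = [set m | act g m == m].
Proof.
move=> hg; apply/setP => m; rewrite inE; apply/idP/idP.
  by move/fixedP => /(_ g (cycle_id g)) ->.
move/eqP => hm; apply: fixedPn => h /cycleP[k ->]; rewrite actX //.
by elim: k => [|k IH] //=; rewrite IH.
Qed.

Lemma aug_cycle g : g \in G -> augM act <[g]>%g = Ig g.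
Proof.
move=> hg; apply/eqP; rewrite eqEsubset; apply/andP; split.
  rewrite -[Ig g]/(gval (Group (Ig_group hg))) gen_subG.
  apply/subsetP => x /imset2P[h m /cycleP[k ->] _ ->] /=.
  elim: k => [|k IH]; first by rewrite expg0 act1 subrr; exact: (group1 (Group (Ig_group hg))).
  have -> : act (g ^+ k.+1) m - m = (act g (act (g ^+ k) m) - act (g ^+ k) m) + (act (g ^+ k) m - m).
    by rewrite expgS actM ?groupX // addrA subrK.
  by apply: (@groupM _ (Group (Ig_group hg))) => //; apply/imsetP; exists (act (g ^+ k) m).
apply/subsetP => x /imsetP[m _ ->]; apply: mem_gen; apply/imset2P.
by exists g m; rewrite ?inE ?cycle_id.
Qed.

Lemma card_cycle g : g \in G -> (#|fixedM act <[g]>%g| * #|Ig g|)%N = #|M|.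
Proof.
move=> hg; rewrite -cardsT -[[set: M]]/(gval [set: M]%G) (card_kerim (Ig_add hg)).
rewrite fixed_cycle //.
have -> : [set x in [set: M]%G | act g x - x == 0%R] = [set m | act g m == m].
  by apply/setP => x; rewrite !inE subr_eq0.
by [].
Qed.

Lemma herbrand g : g \in G -> hhat0 act <[g]>%g = hhatm1 act <[g]>%g.
Proof.
move=> hg; have sHG : <[g]>%g \subset G by rewrite cycle_subG.
have e1 := h0_card sHG; have e2 := hm1_card sHG; have e3 := card_norm sHG.
have e4 := card_cycle hg; rewrite -aug_cycle // in e4.
have pI : (0 < #|normImg act <[g]>%g|)%N.
  by apply/card_gt0P; exists 0; rewrite -[normImg _ _]/(gval (Group (normImg_group sHG))) group1.
have pA : (0 < #|augM act <[g]>%g|)%N by apply/card_gt0P; exists 0; exact: group1.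
change (hhat0 act <[g]>%g * #|normImg act <[g]>%g| = #|fixedM act <[g]>%g|)%N in e1.
change (hhatm1 act <[g]>%g * #|augM act <[g]>%g| = #|normKer act <[g]>%g|)%N in e2.
change (#|normKer act <[g]>%g| * #|normImg act <[g]>%g| = #|M|)%N in e3.
apply/eqP; rewrite -(eqn_pmul2r pI) -(eqn_pmul2r pA) e1 mulnAC e2 e3 e4 //.
Qed.

End Act.

Lemma addf_0 (M : zmodType) (f : M -> M) : {morph f : x y / x + y} -> f 0 = 0.
Proof. by move=> fM; apply: (addrI (f 0)); rewrite -fM !addr0. Qed.
Lemma addf_N (M : zmodType) (f : M -> M) : {morph f : x y / x + y} -> {morph f : x / - x}.
Proof. by move=> fM x; apply/eqP; rewrite -addr_eq0 -fM addNr addf_0. Qed.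
Lemma addf_B (M : zmodType) (f : M -> M) : {morph f : x y / x + y} -> {morph f : x y / x - y}.
Proof. by move=> fM x y; rewrite fM addf_N. Qed.
Lemma addf_sum (M : zmodType) (f : M -> M) (I : Type) (r : seq I) (P : pred I) (F : I -> M) :
  {morph f : x y / x + y} -> f (\sum_(i <- r | P i) F i) = \sum_(i <- r | P i) f (F i).
Proof. by move=> fM; apply: (big_morph f fM (addf_0 fM)). Qed.

Section Trivial.
Variables (gT : finGroupType) (M : finZmodType) (act : gT -> M -> M) (G : {group gT}).
Hypothesis Hmod : is_ZG_module G act.

Lemma normM1 m : normM act 1%G m = m.
Proof. by rewrite /normM big_set1 (act1 Hmod). Qed.

Lemma hh0_1 : hhat0 act 1%G = 1%N.
Proof.
have s1 : (1%G : {group gT}) \subset G by rewrite sub1G.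
have e1 := h0_card Hmod s1.
have eF : fixedM act 1%G = [set: M].
  by apply/setP => m; rewrite [in RHS]inE; apply/idP; apply: fixedPn => h; rewrite inE => /eqP ->; rewrite (act1 Hmod).
have eN : normImg act 1%G = [set: M].
  by apply/setP => m; rewrite [in RHS]inE; apply/imsetP; exists m; rewrite ?inE ?normM1.
have p : (0 < #|[set: M]|)%N by apply/card_gt0P; exists 0; rewrite inE.
by rewrite eF eN in e1; apply/eqP; rewrite -(eqn_pmul2r p) e1 mul1n.
Qed.

Lemma hhm1_1 : hhatm1 act 1%G = 1%N.
Proof.
have s1 : (1%G : {group gT}) \subset G by rewrite sub1G.
have e2 := hm1_card Hmod s1.
have eK : normKer act 1%G = [set 0].
  by apply/setP => m; rewrite !inE normM1.
by rewrite eK cards1 in e2; move/eqP: e2; rewrite muln_eq1 => /andP[/eqP].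
Qed.

End Trivial.

Section Dihedral.
Variables (q : nat) (gT : finGroupType) (rho sigma : gT).
Hypotheses (q_odd : odd q) (q_gt1 : (1 < q)%N) (rho_ord : #[rho]%g = q)
  (sigma_ord : #[sigma]%g = 2%N) (rel : (sigma * rho * sigma^-1 = rho^-1)%g).
Variables (M : finZmodType) (act : gT -> M -> M).
Let D := (<<[set rho; sigma]>>)%G.
Hypothesis Hmod : is_ZG_module D act.

Let rhoD : rho \in D. Proof. by apply: mem_gen; rewrite !inE eqxx. Qed.
Let sigmaD : sigma \in D. Proof. by apply: mem_gen; rewrite !inE eqxx orbT. Qed.
Let rhoVD : rho^-1%g \in D. Proof. by rewrite groupV. Qed.
Let sigmaVD : sigma^-1%g \in D. Proof. by rewrite groupV. Qed.
Let sRD : <[rho]>%g \subset D. Proof. by rewrite cycle_subG. Qed.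
Let sSD : <[sigma]>%g \subset D. Proof. by rewrite cycle_subG. Qed.

Let rhoq : (rho ^+ q = 1)%g. Proof. by rewrite -rho_ord expg_order. Qed.
Let sigma2 : (sigma * sigma = 1)%g. Proof. by rewrite -(expg_order sigma) sigma_ord expgS expg1. Qed.
Let sigmaV : (sigma^-1 = sigma)%g. Proof. by apply/eqP; rewrite eq_invg_mul sigma2. Qed.
Let rel1 : (rho * sigma = sigma * rho^-1)%g.
Proof. by rewrite -rel !mulgA sigma2 mul1g sigmaV. Qed.
Let rel2 : (rho^-1 * sigma = sigma * rho)%g.
Proof. by rewrite -rel sigmaV -mulgA sigma2 mulg1. Qed.

Let aM g h m (hg : g \in D) (hh : h \in D) : act (g * h)%g m = act g (act h m) := actM Hmod m hg hh.

Lemma act_rs y : act rho (act sigma y) = act sigma (act rho^-1 y).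
Proof. by rewrite -!aM // rel1. Qed.
Lemma act_rVs y : act rho^-1 (act sigma y) = act sigma (act rho y).
Proof. by rewrite -!aM // rel2. Qed.
Lemma act_ss y : act sigma (act sigma y) = y.
Proof. by rewrite -aM // sigma2 (act1 Hmod). Qed.

Lemma stab_group m : group_set [set g in D | act g m == m].
Proof.
apply/group_setP; split; first by rewrite inE group1 (act1 Hmod) eqxx.
move=> g h; rewrite !inE => /andP[hg /eqP eg] /andP[hh /eqP eh].
by rewrite groupM // aM // eh eg eqxx.
Qed.

Lemma fixedD : fixedM act D = [set m | (act rho m == m) && (act sigma m == m)].
Proof.
apply/setP => m; rewrite [in RHS]inE; apply/idP/idP.
  by move/fixedP => h; rewrite !h ?rhoD ?sigmaD ?eqxx.
move=> /andP[/eqP e1 /eqP e2]; apply: fixedPn => h hh.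
have : D \subset Group (stab_group m).
  by rewrite gen_subG; apply/subsetP => x; rewrite !inE => /orP[] /eqP ->; rewrite ?rhoD ?sigmaD ?e1 ?e2 eqxx.
by move/subsetP/(_ h hh); rewrite inE => /andP[_ /eqP].
Qed.

Let IR := Group (Ig_group Hmod rhoD).
Let IS := Group (Ig_group Hmod sigmaD).

Lemma IRS_group : group_set (IR * IS)%g.
Proof. by apply/comm_group_setP; apply: centC; apply/centsP => x _ y _; apply: FinRing.zmod_mulgC. Qed.
Let IRS := Group IRS_group.

Lemma augD : augM act D = (Ig act rho * Ig act sigma)%g.
Proof.
apply/eqP; rewrite eqEsubset; apply/andP; split; last first.
  rewrite mul_subG //.
    by rewrite -(aug_cycle Hmod rhoD); apply: genS; apply: imset2S => //; rewrite cycle_subG.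
  by rewrite -(aug_cycle Hmod sigmaD); apply: genS; apply: imset2S => //; rewrite cycle_subG.
rewrite -[(_ * _)%g]/(gval IRS) gen_subG.
have PG : group_set [set g in D | [forall m, act g m - m \in IRS]].
  apply/group_setP; split.
    rewrite inE group1; apply/forallP => m; rewrite (act1 Hmod) subrr; exact: (group1 IRS).
  move=> g h; rewrite !inE => /andP[hg /forallP eg] /andP[hh /forallP eh].
  rewrite groupM //; apply/forallP => m.
  have -> : act (g * h)%g m - m = (act g (act h m) - act h m) + (act h m - m).
    by rewrite aM // addrA subrK.
  exact: (groupM (eg _) (eh _)).
have sub : D \subset Group PG.
  rewrite gen_subG; apply/subsetP => x; rewrite !inE => /orP[] /eqP ->.
    rewrite rhoD; apply/forallP => m; apply: (subsetP (mulG_subl IS IR)).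
    by apply/imsetP; exists m; rewrite ?inE.
  rewrite sigmaD; apply/forallP => m; apply: (subsetP (mulG_subr IR IS)).
  by apply/imsetP; exists m; rewrite ?inE.
apply/subsetP => x /imset2P[h m hh _ ->].
by move/subsetP/(_ h hh): sub; rewrite inE => /andP[_ /forallP].
Qed.

Lemma card_augD : (#|augM act D| * #|Ig act rho :&: Ig act sigma|)%N = (#|Ig act rho| * #|Ig act sigma|)%N.
Proof. by rewrite augD -[Ig act rho]/(gval IR) -[Ig act sigma]/(gval IS) mul_cardG. Qed.


Let phi m := act rho m - act rho^-1 m.
Lemma phi_add : {morph phi : x y / x + y}.
Proof. by move=> x y; rewrite /phi !(actD Hmod) // opprD addrACA. Qed.

Let aX g n m (hg : g \in D) : act (g ^+ n)%g m = iter n (act g) m := actX Hmod n m hg.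

Lemma T2 m : phi m = 0 -> act rho m = m.
Proof.
rewrite /phi => /eqP; rewrite subr_eq0 => /eqP e.
have h2 : act (rho ^+ 2)%g m = m by rewrite aX //= e (actKV Hmod).
have hk k : act (rho ^+ k.*2)%g m = m.
  elim: k => [|k IH]; first by rewrite expg0 (act1 Hmod).
  by rewrite doubleS -addn2 expgD aM ?groupX // h2.
have : rho = (rho ^+ ((q.+1)./2).*2)%g.
  by rewrite halfK /= q_odd subn0 expgS rhoq mulg1.
by move=> {1}->; rewrite hk.
Qed.

Lemma phi_sigma y : phi (act sigma y) = - act sigma (phi y).
Proof. by rewrite /phi act_rs act_rVs (actB Hmod) // opprB. Qed.

Lemma phi_fixR w : act rho w = w -> phi w = 0.
Proof.
move=> e; rewrite /phi e; have := actVK Hmod w rhoD; rewrite e => ->; exact: subrr.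
Qed.

Lemma kerK : [set x in fixedM act <[sigma]>%g | phi x == 0] = fixedM act D.
Proof.
apply/setP => x; rewrite (fixed_cycle Hmod sigmaD) fixedD !inE.
apply/andP/andP => [[/eqP es /eqP hp] | [/eqP er /eqP es]]; split; apply/eqP => //.
  exact: T2.
exact: phi_fixR.
Qed.

Lemma conj_R h : h \in <[rho]>%g -> (sigma * h = h^-1 * sigma)%g.
Proof.
case/cycleP => k ->.
have e : (sigma * rho ^+ k * sigma^-1 = (rho ^+ k)^(sigma^-1))%g.
  by rewrite conjgE invgK mulgA.
rewrite conjXg conjgE invgK mulgA rel expgVn in e.
by rewrite -e mulgKV.
Qed.

Lemma sigma_norm y : act sigma (normM act <[rho]>%g y) = normM act <[rho]>%g (act sigma y).
Proof.
rewrite /normM (act_sum Hmod) // [RHS](reindex_inj invg_inj) /=.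
apply: eq_big => [h|h hh]; first by rewrite groupV.
have hD : h \in D by apply: (subsetP sRD).
by rewrite -aM // conj_R // aM ?groupV.
Qed.

Lemma norm_fixR z : act rho z = z -> normM act <[rho]>%g z = z *+ q.
Proof.
move=> hz; have : z \in fixedM act <[rho]>%g by rewrite (fixed_cycle Hmod rhoD) inE hz.
move/fixedP => hf; rewrite /normM (eq_bigr (fun _ => z)) ?sumr_const //.
by rewrite -rho_ord.
Qed.

Lemma zid (V : zmodType) (a b c d : V) : (a - b) + (- c - (d - (b + c + c))) = a + (c - d).
Proof. rewrite opprB -!addrA; congr (_ + _); by rewrite addrCA !addKr. Qed.
Lemma zid2 (V : zmodType) (a m b : V) : (a + m) - (m + b) = a - b.
Proof. by rewrite opprD addrA addrK. Qed.

Lemma imK : phi @: fixedM act <[sigma]>%g = Ig act rho :&: Ig act sigma.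
Proof.
apply/eqP; rewrite eqEsubset; apply/andP; split.
  apply/subsetP => x /imsetP[m]; rewrite (fixed_cycle Hmod sigmaD) inE => /eqP hm ->.
  rewrite inE; apply/andP; split; apply/imsetP.
    exists (m + act rho^-1 m); rewrite ?inE //.
    by rewrite /phi (actD Hmod) // (actKV Hmod) // zid2.
  exists (- act rho m); rewrite ?inE //.
  have e : act rho^-1 m = act sigma (act rho m) by rewrite -{1}hm act_rVs.
  by rewrite /phi (actN Hmod) // opprK e addrC.
apply/subsetP => x /setIP[/imsetP[a _ exa] /imsetP[b _ exb]].
have Sx : act sigma x = - x by rewrite exb (actB Hmod) // act_ss opprB.
pose k0 := (q.+1)./2.
pose y0 := \sum_(0 <= j < k0) act (rho ^+ (j.*2.+1))%g a.
have step j : phi (act (rho ^+ (j.*2.+1))%g a) =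
    act (rho ^+ (j.+1).*2)%g a - act (rho ^+ j.*2)%g a.
  rewrite /phi -!aM ?groupX ?groupV // -expgS doubleS; congr (_ - act _ a).
  by rewrite expgS mulKg.
have hy0 : phi y0 = x.
  rewrite /y0 (big_morph phi phi_add (addf_0 phi_add)).
  under eq_bigr do rewrite step.
  rewrite (telescope_sumr (fun j => act (rho ^+ j.*2)%g a)) // expg0 (act1 Hmod).
  by rewrite /k0 halfK /= q_odd subn0 expgS rhoq mulg1 exa.
have hsy0 : phi (act sigma y0) = x by rewrite phi_sigma hy0 Sx opprK.
pose z := y0 - act sigma y0.
have hz : act rho z = z by apply: T2; rewrite /z (addf_B phi_add) hy0 hsy0 subrr.
have Sz : act sigma z = - z by rewrite /z (actB Hmod) // act_ss opprB.
pose r := q./2.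
have hq : q = (r + r).+1 by rewrite -{1}(odd_double_half q) q_odd addnn.
pose N := normM act <[rho]>%g.
pose w := z *+ r - N y0.
have hw : act rho w = w.
  by rewrite /w (actB Hmod) // (actMn Hmod) // hz /N (normM_fixed Hmod sRD) ?cycle_id.
apply/imsetP; exists (y0 + w); last by rewrite phi_add (phi_fixR hw) hy0 addr0.
rewrite (fixed_cycle Hmod sigmaD) inE (actD Hmod) // /w (actB Hmod) // (actMn Hmod) //.
rewrite Sz /N sigma_norm.
have -> : act sigma y0 = y0 - z by rewrite /z opprB addrC subrK.
rewrite (addf_B (normM_add Hmod sRD)) (norm_fixR hz) hq mulrS mulrnDr mulNrn.
by apply/eqP; rewrite (addrA z) zid.
Qed.

Lemma key : (#|fixedM act D| * #|Ig act rho :&: Ig act sigma|)%N = #|fixedM act <[sigma]>%g|.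
Proof.
have e := card_kerim phi_add (Group (fixed_group Hmod sSD)).
have e' : (#|fixedM act <[sigma]>%g| = #|[set x in fixedM act <[sigma]>%g | phi x == 0%R]| *
   #|phi @: fixedM act <[sigma]>%g|)%N := e.
by rewrite kerK imK in e'; rewrite e'.
Qed.
End Dihedral.

Lemma card_fibers (T : finType) (g : T -> nat) (b : nat) k : forall (A : {set T}),
  (forall m, m \in A -> (g m < k)%N) -> (forall j, #|[set m in A | g m == j]| <= b)%N ->
  (#|A| <= k * b)%N.
Proof.
elim: k => [|k IH] A hA hb.
  rewrite mul0n leqn0 cards_eq0; apply/eqP/setP => m; rewrite inE.
  by apply/negP => /hA.
rewrite -(cardsID [set m | g m < k]%N A) mulSn addnC.
apply: leq_add; last first.
  apply: IH => [m|j]; first by rewrite !inE => /andP[].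
  apply: leq_trans (hb j); apply: subset_leq_card; apply/subsetP => m.
  by rewrite !inE => /andP[/andP[-> _] ->].
apply: leq_trans (hb k); apply: subset_leq_card; apply/subsetP => m.
rewrite !inE => /andP[hm hmA]; rewrite hmA /=.
by have := hA m hmA; rewrite ltnS leq_eqVlt (negbTE hm) orbF.
Qed.

Section Dual.
Variables (gT : finGroupType) (M : finZmodType) (act : gT -> M -> M) (G : {group gT}).
Hypothesis Hmod : is_ZG_module G act.
Variable f : M -> M -> rat.
Hypothesis Hf : dual_iso act G f.

Let fhom m : QZ_hom (f m). Proof. by case: Hf. Qed.
Let fadd m m' x : f (m + m') x = fracQ (f m x + f m' x). Proof. by case: Hf. Qed.
Let finj : injective f. Proof. by case: Hf. Qed.
Let fequiv g : g \in G -> forall m x, f (act g m) x = f m (act g^-1 x). Proof. by case: Hf => _ _ _ _; apply. Qed.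
Let frange m x : 0 <= f m x < 1. Proof. by case: (fhom m). Qed.

Lemma f0 x : f 0 x = 0.
Proof. by have := fadd 0 0 x; rewrite addr0 => /esym; apply: fracQ_cancel. Qed.

Lemma fsub m m0 x : f m x = fracQ (f (m - m0) x + f m0 x).
Proof. by rewrite -fadd subrK. Qed.

Definition perp (X : {set M}) := [set m | [forall x in X, f m x == 0]].

Lemma perp_group X : group_set (perp X).
Proof.
apply: add_group_set; first by rewrite inE; apply/forall_inP => x _; rewrite f0.
move=> m m'; rewrite !inE => /forall_inP h1 /forall_inP h2; apply/forall_inP => x hx.
by rewrite fadd (eqP (h1 x hx)) (eqP (h2 x hx)) addr0 fracQ_id // lexx ltr01.
Qed.

Lemma perp_vanish m (K : {group M}) : (forall x, x \in K -> f m x = 0) -> m \in perp K.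
Proof. by move=> h; rewrite inE; apply/forall_inP => x /h ->. Qed.

Lemma perp_1 : perp 1%G = [set: M].
Proof.
apply/setP => m; rewrite !inE; apply/forall_inP => x; rewrite inE => /eqP ->.
by rewrite -[1%g]/(0 : M) QZ0.
Qed.

Lemma perp_T : perp [set: M] = [set 0].
Proof.
apply/setP => m; rewrite !inE; apply/idP/idP => [/forall_inP h | /eqP ->]; last first.
  by apply/forall_inP => x _; rewrite f0.
apply/eqP; apply: finj; apply: functional_extensionality => x.
by rewrite f0; apply/eqP; apply: h; rewrite inE.
Qed.


Lemma one_step (H : {group M}) c :
  (#|perp H| * #|H| <= #|perp (H <*> <[c]>)%G| * #|(H <*> <[c]>)%G|)%N.
Proof.
set H' := (H <*> <[c]>)%G.
have sHH' : H \subset H' by apply: joing_subl.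
have cH' : c \in H' by apply: (subsetP (joing_subr _ _)); apply: cycle_id.
set k := #|H' : H|%g.
have kpos : (0 < k)%N by apply: indexg_gt0.
have nH : H' \subset 'N(H)%g.
  apply: subset_trans (subsetT H') _.
  by apply: sub_abelian_norm; [exact: FinRing.zmod_abelian | exact: subsetT].
have cN : c \in 'N(H)%g by apply: (subsetP nH).
have ck : (c ^+ k)%g \in H.
  apply: coset_idr; first by rewrite groupX.
  by rewrite morphX // /k -(card_quotient nH) expg_cardG // mem_quotient.
rewrite -(Lagrange sHH') -/k mulnA mulnAC leq_mul2r; apply/orP; right.
rewrite mulnC.
pose g m := absz (Num.floor (k%:R * f m c)).
have hint m : m \in perp H -> k%:R * f m c = (Num.floor (k%:R * f m c))%:~R.
  move=> hm; have : f m (c *+ k) = 0.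
    by move: hm; rewrite inE => /forall_inP/(_ _ ck)/eqP.
  by rewrite QZMn // => /eqP; rewrite subr_eq0 => /eqP.
have kR : 0 < k%:R :> rat by rewrite ltr0n.
have ge0 m : 0 <= Num.floor (k%:R * f m c).
  by rewrite floor_ge0 mulr_ge0 ?ler0n //; case/andP: (frange m c).
have ez m : (g m)%:Z = Num.floor (k%:R * f m c) by rewrite /g gez0_abs.
apply: (card_fibers (g := g)) => [m hm | j].
  rewrite -ltz_nat ez floor_lt_int -[X in _ < X]mulr1 ltr_pM2l //.
  by case/andP: (frange m c).
case: (boolP ([set m in perp H | g m == j] == set0)) => [/eqP -> | /set0Pn [m0]]; first by rewrite cards0.
rewrite inE => /andP[hm0 /eqP gm0].
have inj : injective (fun m : M => m - m0) := can_inj (subrK m0).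
rewrite -(card_imset _ inj); apply: subset_leq_card; apply/subsetP => y /imsetP[m].
rewrite inE => /andP[hm /eqP gm] ->.
apply: perp_vanish => x hx.
have : H' \subset Group (QZ_ker_group (fhom (m - m0))).
  rewrite join_subG; apply/andP; split.
    apply/subsetP => z hz; rewrite inE; apply/eqP.
    have := fsub m m0 z.
    move: hm hm0; rewrite !inE => /forall_inP/(_ _ hz)/eqP -> /forall_inP/(_ _ hz)/eqP ->.
    by move/esym; apply: fracQ_cancel => //; rewrite lexx ltr01.
  rewrite cycle_subG inE; apply/eqP.
  have e : f m c = f m0 c.
    apply: (mulfI (lt0r_neq0 kR)); rewrite (hint m hm) (hint m0 hm0) -!ez gm gm0 //.
  by have := fsub m m0 c; rewrite e => /esym; apply: fracQ_cancel.
by move/subsetP/(_ x hx); rewrite inE => /eqP.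
Qed.


Lemma perp_mono n : forall H K : {group M}, H \subset K -> (#|K| - #|H| <= n)%N ->
  (#|perp H| * #|H| <= #|perp K| * #|K|)%N.
Proof.
elim: n => [|n IH] H K sHK hn; case: (boolP (K \subset H)) => sKH.
- have eHK : (H :=: K) by apply/eqP; rewrite eqEsubset sHK sKH.
  by rewrite eHK.
- have [c cK cH] := subsetPn sKH.
  have : (#|H| < #|K|)%N by apply: proper_card; apply/properP; split => //; exists c.
  by move: hn; rewrite leqn0 subn_eq0 => /leq_ltn_trans h /h; rewrite ltnn.
- have eHK : (H :=: K) by apply/eqP; rewrite eqEsubset sHK sKH.
  by rewrite eHK.
have [c cK cH] := subsetPn sKH.
set H' := (H <*> <[c]>)%G.
have sH'K : H' \subset K by rewrite join_subG sHK cycle_subG.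
have lt1 : (#|H| < #|H'|)%N.
  apply: proper_card; apply/properP; split; first exact: joing_subl.
  by exists c => //; apply: (subsetP (joing_subr _ _)); apply: cycle_id.
have le2 : (#|H'| <= #|K|)%N by apply: subset_leq_card.
apply: leq_trans (one_step H c) _; apply: IH => //.
move: hn lt1 le2; move: #|K| #|H| #|H'| => a b d; lia.
Qed.

Lemma perp_card (H : {group M}) : (#|perp H| * #|H|)%N = #|M|.
Proof.
apply/eqP; rewrite eqn_leq; apply/andP; split.
  have := @perp_mono #|M| H [set: M]%G (subsetT _) (leq_trans (leq_subr _ _) (max_card _)).
  by rewrite perp_T cards1 mul1n cardsT.
have := @perp_mono #|M| 1%G H (sub1G _) (leq_trans (leq_subr _ _) (max_card _)).
by rewrite perp_1 cardsT cards1 muln1.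
Qed.

Lemma fixed_perp : fixedM act G = perp (augM act G).
Proof.
apply/setP => m; apply/idP/idP => [hm | hm].
  apply: (@perp_vanish m (<<[set act h m0 - m0 | h in G, m0 in [set: M]]>>)%G) => x hx.
  have : (<<[set act h m0 - m0 | h in G, m0 in [set: M]]>> \subset Group (QZ_ker_group (fhom m)))%g.
    rewrite gen_subG; apply/subsetP => z /imset2P[h y hh _ ->]; rewrite inE; apply/eqP.
    have e : f m (act h y) = f m y.
      by rewrite -{1}(invgK h) -fequiv ?groupV // (fixedP hm) // groupV.
    have := fhom m; case => _ /(_ (act h y - y) y); rewrite subrK e => /esym.
    by apply: fracQ_cancel.
  by move/subsetP/(_ x hx); rewrite inE => /eqP.
apply: fixedPn => g hg; apply: finj; apply: functional_extensionality => x.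
rewrite fequiv //.
have hz : act g^-1 x - x \in augM act G.
  by apply: mem_gen; apply/imset2P; exists g^-1%g x; rewrite ?inE ?groupV.
have := fhom m; case => _ /(_ (act g^-1 x - x) x); rewrite subrK => ->.
move: hm; rewrite inE => /forall_inP/(_ _ hz)/eqP ->.
by rewrite add0r fracQ_id.
Qed.

Lemma fixed_aug_card : (#|fixedM act G| * #|augM act G|)%N = #|M|.
Proof.
rewrite fixed_perp.
exact: (perp_card (<<[set act h m0 - m0 | h in G, m0 in [set: M]]>>)%G).
Qed.

End Dual.

Lemma hpos (gT : finGroupType) (M : finZmodType) (act : gT -> M -> M) (G H : {group gT}) :
  is_ZG_module G act -> H \subset G -> (0 < hhat0 act H)%N /\ (0 < hhatm1 act H)%N.
Proof.
move=> Hm sHG; split.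
  have e := h0_card Hm sHG; rewrite lt0n; apply/eqP => h0; move: e; rewrite h0 mul0n => /esym/eqP.
  rewrite -[fixedM act H]/(gval (Group (fixed_group Hm sHG))) cards_eq0 => /eqP h.
  by have := group1 (Group (fixed_group Hm sHG)); rewrite h inE.
have e := hm1_card Hm sHG; rewrite lt0n; apply/eqP => h0; move: e; rewrite h0 mul0n => /esym/eqP.
rewrite -[normKer act H]/(gval (Group (normKer_group Hm sHG))) cards_eq0 => /eqP h.
by have := group1 (Group (normKer_group Hm sHG)); rewrite h inE.
Qed.

Lemma arith1 (n fD fR fS a b c I P K h0 hm : nat) : (0 < n)%N -> (0 < fD)%N -> (0 < fR)%N ->
  (0 < c)%N -> (0 < P)%N -> (0 < I)%N -> (0 < hm)%N ->
  (fR * a = n)%N -> (fS * b = n)%N -> (I * c = a * b)%N -> (fD * c = fS)%N ->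
  (h0 * P = fD)%N -> (hm * I = K)%N -> (K * P = n)%N ->
  (n%:R * fD%:R ^+ 2) / (fR%:R * fS%:R ^+ 2) = h0%:R / hm%:R :> rat.
Proof.
move=> pn pD pR pc pP pI phm E1 E2 E3 E4 E5 E6 E7.
have nz x : (0 < x)%N -> x%:R != 0 :> rat by move=> h; rewrite pnatr_eq0 -lt0n.
have zn := nz _ pn; have zD := nz _ pD; have zR := nz _ pR; have zc := nz _ pc.
have zP := nz _ pP; have zI := nz _ pI; have zhm := nz _ phm.
have r x y z : (x * y = z)%N -> x%:R * y%:R = z%:R :> rat by move=> <-; rewrite natrM.
move/r: E1 => e1; move/r: E2 => e2; move/r: E3 => e3; move/r: E4 => e4; move/r: E5 => e5.
move/r: E6 => e6; move/r: E7 => e7.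
rewrite natrM in e3.
rewrite -e4 in e2 *.
have eh0 : h0%:R = fD%:R / P%:R :> rat by rewrite -e5; field.
have zK : K%:R != 0 :> rat by rewrite -e6 mulf_neq0.
have eP : P%:R = n%:R / K%:R :> rat by rewrite -e7; field.
have eK : K%:R = hm%:R * I%:R :> rat by rewrite e6.
have eI : I%:R = a%:R * b%:R / c%:R :> rat by rewrite -e3; field.
have ea : a%:R = n%:R / fR%:R :> rat by rewrite -e1; field.
have eb : b%:R = n%:R / (fD%:R * c%:R) :> rat by rewrite -e2; field; rewrite zc zD.
rewrite eh0 eP eK eI ea eb; field.
by rewrite ?zn ?zD ?zR ?zc ?zP ?zI ?zhm ?zK.
Qed.

Lemma fixed1 (gT : finGroupType) (M : finZmodType) (act : gT -> M -> M) :
  (forall m, act 1%g m = m) -> fixedM act 1%g = [set: M].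
Proof.
move=> h1; apply/setP => m; rewrite [in RHS]inE; apply/idP; apply: fixedPn => g.
by rewrite inE => /eqP ->.
Qed.

Unset Implicit Arguments.
Set Strict Implicit.

Theorem mainTheorem7 (q : nat) (q_odd : odd q) (q_gt1 : (1 < q)%N)
  (gT : finGroupType) (rho sigma : gT)
  (rho_ord : #[rho]%g = q) (sigma_ord : #[sigma]%g = 2%N)
  (rel : (sigma * rho * sigma^-1 = rho^-1)%g)
  (M : finZmodType) (act : gT -> M -> M)
  (Hmod : is_ZG_module <<[set rho; sigma]>>%g act) :
  let D := <<[set rho; sigma]>>%g in
  let R := <[rho]>%g in
  let S := <[sigma]>%g in
  let ratio : rat := (#|M|%:R * #|fixedM act D|%:R ^+ 2)
                     / (#|fixedM act R|%:R * #|fixedM act S|%:R ^+ 2) in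
  [/\ ratio = (hhat0 act D)%:R / (hhatm1 act D)%:R,
      regconst_fin act D R S = ((hhatm1 act D)%:R / (hhat0 act D)%:R) ^+ 2,
      regconst_fin act D R S =
        theta_prod D R S (fun H => (hhatm1 act H)%:R)
        / theta_prod D R S (fun H => (hhat0 act H)%:R)
    & self_dual act D -> ratio = 1 /\ regconst_fin act D R S = 1].
Proof.
move=> D R S ratio.
pose DG := (<<[set rho; sigma]>>)%G.
have rhoD : rho \in DG by apply: mem_gen; rewrite !inE eqxx.
have sigmaD : sigma \in DG by apply: mem_gen; rewrite !inE eqxx orbT.
have sDD : DG \subset DG := subxx _.
have E1 := card_cycle Hmod rhoD.
have E2 := card_cycle Hmod sigmaD.
have E3 := card_augD Hmod.
have E4 := key q_odd rho_ord sigma_ord rel Hmod.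
have E5 := h0_card Hmod sDD.
have E6 := hm1_card Hmod sDD.
have E7 := card_norm Hmod sDD.
have [p0 pm] := hpos Hmod sDD.
have pos (A : {group M}) : (0 < #|A|)%N by apply/card_gt0P; exists 1%g; apply: group1.
have pn : (0 < #|M|)%N by rewrite -cardsT (pos [set: M]%G).
have pD : (0 < #|fixedM act D|)%N := pos (Group (fixed_group Hmod sDD)).
have sRD : <[rho]>%G \subset DG by rewrite cycle_subG.
have sSD : <[sigma]>%G \subset DG by rewrite cycle_subG.
have pR : (0 < #|fixedM act R|)%N := pos (Group (fixed_group Hmod sRD)).
have pS : (0 < #|fixedM act S|)%N := pos (Group (fixed_group Hmod sSD)).
have pc : (0 < #|Ig act rho :&: Ig act sigma|)%N.
  by apply/card_gt0P; exists 0; rewrite inE; apply/andP; split; apply/imsetP; exists 0;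
    rewrite ?inE // (act0 Hmod) ?subrr.
have pP : (0 < #|normImg act D|)%N := pos (Group (normImg_group Hmod sDD)).
have pI : (0 < #|augM act D|)%N := pos (<<[set act h m - m | h in D, m in [set: M]]>>)%G.
have C1 : ratio = (hhat0 act D)%:R / (hhatm1 act D)%:R.
  exact: (arith1 pn pD pR pc pP pI pm E1 E2 E3 E4 E5 E6 E7).
have nz x : (0 < x)%N -> x%:R != 0 :> rat by move=> h; rewrite pnatr_eq0 -lt0n.
have C2 : regconst_fin act D R S = ((hhatm1 act D)%:R / (hhat0 act D)%:R) ^+ 2.
  rewrite /regconst_fin /theta_prod (fixed1 (act1 Hmod)) cardsT.
  rewrite -[X in _ = X ^+ 2]invf_div -C1 /ratio.
  by field; rewrite ?nz.
have [p0R pmR] := hpos Hmod sRD.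
have [p0S pmS] := hpos Hmod sSD.
have hR : hhat0 act R = hhatm1 act R := herbrand Hmod rhoD.
have hS : hhat0 act S = hhatm1 act S := herbrand Hmod sigmaD.
have h01 : hhat0 act 1%g = 1%N := hh0_1 Hmod.
have hm1 : hhatm1 act 1%g = 1%N := hhm1_1 Hmod.
split => //.
  rewrite C2 /theta_prod h01 hm1 hR hS.
  by field; rewrite ?nz.
case=> f Hf.
have E8 := fixed_aug_card (G := DG) Hf.
have eh : hhat0 act D = hhatm1 act D.
  apply/eqP; rewrite -(eqn_pmul2r pP) -(eqn_pmul2r pI) E5 E8 mulnAC E6 E7 //.
split; first by rewrite C1 eh divff ?nz.
by rewrite C2 eh divff ?nz ?expr1n.
Qed.
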